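(* For all integers $1\leq k\leq n$, $$\mathrm{ex}(K_{n,n,n,n},kK_3)\geq 4n^2+(k-1)n.$$
   Context: For graphs $G,H$, $\mathrm{ex}(G,H)$ is the maximum number of edges of a subgraph of $G$ containing no copy of $H$. $K_{n,n,n,n}$ is the complete $4$-partite graph with all parts of size $n$, and $kK_3$ denotes $k$ vertex-disjoint triangles. *)

(* Defs.v *)
From mathcomp Require Import all_boot.
Set Implicit Arguments. Unset Strict Implicit. Unset Printing Implicit Defensive.

(* Vertices of K_{n,n,n,n}: (part, index) with 4 parts of size n. *)
Definition V (n : nat) : finType := prod 'I_4 'I_n.

(* A (simple-graph) edge is an unordered pair {u,v}, represented as a 2-set. *)
Definition host_edges (n : nat) : {set {set V n}} :=
  [set e | [exists u : V n, exists v : V n, (u.1 != v.1) && (e == [set u; v])]].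

Definition has_kK3 (n k : nat) (E : {set {set V n}}) : bool :=
  [exists f : {ffun ('I_k * 'I_3) -> V n},
     injectiveb f &&
     [forall i : 'I_k, forall j : 'I_3, forall j' : 'I_3,
        (j != j') ==> ([set f (i, j); f (i, j')] \in E)]].

Definition ex_K4n_kK3 (n k : nat) : nat :=
  \max_(E : {set {set V n}} | (E \subset host_edges n) && ~~ has_kK3 k E) #|E|.

(* Main.v *)
Require Import Defs.
From mathcomp Require Import all_boot.
From mathcomp Require Import zify.
Set Implicit Arguments. Unset Strict Implicit.

Lemma card_lt (n m : nat) : m <= n -> #|[set j : 'I_n | j < m]| = m.
Proof.
move=> Hmn.
have -> : [set j : 'I_n | j < m] = [set widen_ord Hmn i | i in 'I_m].
  apply/setP => j; rewrite inE; apply/idP/imsetP.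
    by move=> Hj; exists (Ordinal Hj) => //; apply: val_inj.
  by case=> i _ ->; rewrite /= ltn_ord.
rewrite card_imset ?card_ord //.
by move=> i j /(congr1 val) /= H; apply: val_inj.
Qed.

Lemma set2_cases (T : finType) (x y a b : T) :
  x != y -> [set x; y] = [set a; b] ->
  ((x == a) && (y == b)) || ((x == b) && (y == a)).
Proof.
move=> Hxy E.
have hx : x \in [set a; b] by rewrite -E set21.
have hy : y \in [set a; b] by rewrite -E set22.
move: hx hy Hxy; rewrite !inE.
by case/orP => /eqP -> ; case/orP => /eqP ->; rewrite ?eqxx //= ?orbT.
Qed.

Section Constr.
Variables n k : nat.

Definition S3 : {set V n} := [set x : V n | (val x.1 == 0) && (val x.2 < k.-1)].
Definition sd (x : V n) : bool := val x.1 < 2.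
Definition P : {set V n * V n} :=
  [set p : V n * V n | ((val p.1.1 < 2) && (2 <= val p.2.1)) ||
                        ((p.1 \in S3) && (val p.2.1 == 1))].
Definition mk (p : V n * V n) : {set V n} := [set p.1; p.2].
Definition E : {set {set V n}} := mk @: P.

Lemma P_lt p : p \in P -> val p.1.1 < val p.2.1.
Proof.
rewrite !inE; case/orP => [/andP[H1 H2]|/andP[/andP[/eqP -> _] /eqP ->]] //.
exact: leq_trans H1 H2.
Qed.

Lemma P_neq p : p \in P -> p.1 != p.2.
Proof.
move=> /P_lt H; apply/eqP => E'; by rewrite E' ltnn in H.
Qed.

Lemma mk_inj : {in P &, injective mk}.
Proof.
case=> [a b] [c d] Hp Hq; rewrite /mk /= => Heq.
have := set2_cases (P_neq Hp) Heq.
case/orP => /andP[/eqP /= Ha /eqP /= Hb]; first by rewrite Ha Hb.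
have := P_lt Hp; have := P_lt Hq; rewrite /= Ha Hb => H1 H2.
by have := ltn_trans H1 H2; rewrite ltnn.
Qed.

Lemma E_host : E \subset host_edges n.
Proof.
apply/subsetP => e /imsetP [p Hp ->]; rewrite inE.
apply/existsP; exists p.1; apply/existsP; exists p.2.
rewrite eqxx andbT; apply/eqP => H.
by have := P_lt Hp; rewrite H ltnn.
Qed.

Lemma edge_S3 x y : x != y -> [set x; y] \in E -> sd x = sd y ->
  (x \in S3) || (y \in S3).
Proof.
move=> Hxy /imsetP [p Hp Heq] Hs.
have := set2_cases Hxy Heq.
move: Hp; rewrite inE /sd in Hs *.
case/orP => [/andP[H1 H2]|/andP[H3 _]].
  case/orP => /andP[/eqP Ha /eqP Hb]; move: Hs; rewrite Ha Hb.
    by rewrite H1 ltnNge H2.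
  by rewrite H1 ltnNge H2.
by case/orP => /andP[/eqP Ha /eqP Hb]; rewrite Ha Hb H3 ?orbT.
Qed.

Lemma card_S3 : k.-1 <= n -> #|S3| = k.-1.
Proof.
move=> Hk.
have -> : S3 = setX [set i : 'I_4 | i < 1] [set j : 'I_n | j < k.-1].
  apply/setP => [[i j]]; rewrite !inE /=.
  by case: i => [[|i] Hi].
rewrite (cardsX (fT1 := ordinal 4) (fT2 := ordinal n)) !card_lt //; by rewrite mul1n.
Qed.

Lemma card_P : k.-1 <= n -> #|P| = 4 * n ^ 2 + k.-1 * n.
Proof.
move=> Hk.
set S1 : {set V n} := setX [set i : 'I_4 | i < 2] [set: 'I_n].
set S2 : {set V n} := setX (~: [set i : 'I_4 | i < 2]) [set: 'I_n].
set S4 : {set V n} := setX [set Ordinal (isT : 1 < 4)] [set: 'I_n].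
have -> : P = setX S1 S2 :|: setX S3 S4.
  apply/setP => [[[a1 a2] [b1 b2]]]; rewrite !inE /= -leqNgt.
  rewrite !andbT; congr (_ || (_ && _)).
rewrite cardsU.
have -> : setX S1 S2 :&: setX S3 S4 = set0.
  apply/setP => [[[a1 a2] [b1 b2]]]; rewrite !inE /=.
  apply/negbTE; apply/negP => /andP[/andP[_ /andP[H _]] /andP[_ /andP[/eqP H' _]]].
  by move: H; rewrite H'.
rewrite cards0 subn0 !(cardsX (fT1 := V n) (fT2 := V n)) card_S3 //.
rewrite /S1 /S2 /S4 !(cardsX (fT1 := ordinal 4) (fT2 := ordinal n)) (cardsCs (~: _)) setCK card_lt // !cardsT !card_ord cards1 /=.
nia.
Qed.

Lemma no_kK3 : k.-1 <= n -> 0 < k -> ~~ has_kK3 k E.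
Proof.
move=> Hk Hk0; apply/negP => /existsP [f /andP [/injectiveP finj /forallP H]].
have key : forall i, exists j, f (i, j) \in S3.
  move=> i.
  have Hij : forall j j', j != j' -> sd (f (i, j)) = sd (f (i, j')) ->
      exists j0, f (i, j0) \in S3.
    move=> j j' Hjj' Hs.
    have He : [set f (i, j); f (i, j')] \in E.
      by move: (H i) => /forallP /(_ j) /forallP /(_ j') /implyP; apply.
    have Hne : f (i, j) != f (i, j').
      apply/negP => /eqP /finj [] /eqP; exact/negP.
    case/orP: (edge_S3 Hne He Hs) => Hin; [by exists j | by exists j'].
  pose o0 := Ordinal (isT : 0 < 3).
  pose o1 := Ordinal (isT : 1 < 3).
  pose o2 := Ordinal (isT : 2 < 3).
  case Ha: (sd (f (i, o0))); case Hb: (sd (f (i, o1)));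
    case Hc: (sd (f (i, o2))).
  all: try first [ by apply: (Hij o0 o1) => //; rewrite Ha Hb
             | by apply: (Hij o0 o2) => //; rewrite Ha Hc
             | by apply: (Hij o1 o2) => //; rewrite Hb Hc ].
pose g i := odflt ord0 [pick j | f (i, j) \in S3].
have gS : forall i, f (i, g i) \in S3.
  move=> i; rewrite /g; case: pickP => [j //|none].
  by have [j Hj] := key i; rewrite none in Hj.
pose h i := f (i, g i).
have hinj : injective h by move=> i i' /finj [].
have Hsub : h @: [set: 'I_k] \subset S3.
  by apply/subsetP => x /imsetP [i _ ->]; exact: gS.
have := subset_leq_card Hsub.
rewrite card_imset // cardsT card_ord card_S3 //.
lia.
Qed.

End Constr.

Theorem mainTheorem5 (n k : nat) (hk1 : 1 <= k) (hkn : k <= n) :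
  4 * n ^ 2 + (k - 1) * n <= ex_K4n_kK3 n k.
Proof.
have Hk : k.-1 <= n by lia.
rewrite /ex_K4n_kK3.
have -> : 4 * n ^ 2 + (k - 1) * n = #|E n k|.
  rewrite /E card_in_imset; last exact: mk_inj.
  by rewrite card_P // subn1.
apply: leq_bigmax_cond.
by rewrite E_host no_kK3.
Qed.
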